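(* Suppose there are at least three states ($n\ge3$). If an updating rule respects the Blackwell order for a prior $\mu$ in the relative interior of $\Delta$, then either $\varphi^{\mu}(x)=x$ for all $x\in\Delta$ (Bayes' law), or $\varphi^{\mu}$ is constant on the relative interior of $\Delta$.
   Context: Let $\Theta$ be a finite set of states, $|\Theta|=n$, and $\Delta=\Delta(\Theta)$ the simplex of beliefs on $\Theta$. An experiment is a map $\pi:\Theta\to\Delta(S)$ with $S$ finite; with prior $\mu$ it induces the Bayesian distribution over posteriors $\rho_B$, a finitely supported distribution on $\Delta$ with mean $\mu$ (every such distribution arises from some experiment). Blackwell order: $\pi\succeq\pi'$ iff $\rho_B'$ is a mean-preserving contraction of $\rho_B$. An updating rule is given, for each prior $\mu$, by a distortion function $\varphi^{\mu}:\Delta\to\Delta$: when the Bayesian posterior is $x$, the decision maker holds belief $\varphi^{\mu}(x)$. For a compact action set $A$, continuous $u:A\times\Theta\to\mathbb{R}$, and consistent choice $a^*:\Delta\to A$ (i.e. $a^*(y)\in\arg\max_{a}\mathbb{E}_y u(a,\theta)$ for all $y$), let $W(x)=\mathbb{E}_x u(a^*(\varphi^{\mu}(x)),\theta)$. The rule respects the Blackwell order for $\mu$ if for all such $A,u,a^*$ and all experiments $\pi\succeq\pi'$ with Bayesian distributions $\rho_B,\rho_B'$, $\mathbb{E}_{\rho_B}W\ge\mathbb{E}_{\rho_B'}W$. *)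

(* Defs.v *)
From HB Require Import structures.
From mathcomp Require Import all_boot all_order all_algebra.
From mathcomp Require Import all_classical all_reals all_analysis.
Set Implicit Arguments. Unset Strict Implicit. Unset Printing Implicit Defensive.
Import Order.TTheory GRing.Theory Num.Theory numFieldNormedType.Exports.
Local Open Scope ring_scope.
Local Open Scope classical_set_scope.

Section Defs.
Variable R : realType.

(* Beliefs on the state space Theta = 'I_n are row vectors; x 0 t = x(t). *)
Definition simplex n (x : 'rV[R]_n) : Prop :=
  (forall t, 0 <= x 0 t) /\ \sum_t x 0 t = 1.

Definition relint_simplex n (x : 'rV[R]_n) : Prop :=
  (forall t, 0 < x 0 t) /\ \sum_t x 0 t = 1.

Definition expect n (x : 'rV[R]_n) (f : 'I_n -> R) : R :=
  \sum_t x 0 t * f t.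

(* A finitely supported distribution on Delta, given as atoms x j with
   weights p j, j < m, having mean mu. *)
Definition fsdist_mean n m (p : 'I_m -> R) (x : 'I_m -> 'rV[R]_n)
    (mu : 'rV[R]_n) : Prop :=
  [/\ (forall j, 0 <= p j), \sum_j p j = 1, (forall j, simplex (x j))
    & \sum_j p j *: x j = mu].

(* (p', x') is a mean-preserving contraction of (p, x): there is a Markov
   kernel q from atoms of rho' to atoms of rho that splits each atom of rho'
   (of positive weight) into a distribution with the same mean, and whose
   mixture under rho' is rho. *)
Definition mpc n m m' (p : 'I_m -> R) (x : 'I_m -> 'rV[R]_n)
    (p' : 'I_m' -> R) (x' : 'I_m' -> 'rV[R]_n) : Prop :=
  exists q : 'I_m' -> 'I_m -> R,
    [/\ (forall i j, 0 <= q i j), (forall i, \sum_j q i j = 1),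
        (forall j, \sum_i p' i * q i j = p j)
      & (forall i, 0 < p' i -> \sum_j q i j *: x j = x' i)].

(* The updating rule with distortion phi (= phi^mu) respects the Blackwell
   order for prior mu. Action sets are compact metric spaces. *)
Definition respects_blackwell n (phi : 'rV[R]_n -> 'rV[R]_n) (mu : 'rV[R]_n)
    : Prop :=
  forall (A : pseudoMetricType R) (u : A -> 'I_n -> R) (astar : 'rV[R]_n -> A),
    hausdorff_space A -> compact [set: A] ->
    (forall t, continuous (fun a => u a t)) ->
    (forall y, simplex y -> forall a, expect y (u a) <= expect y (u (astar y))) ->
    let W := fun x => expect x (u (astar (phi x))) in
    forall m (p : 'I_m -> R) (x : 'I_m -> 'rV[R]_n)
           m' (p' : 'I_m' -> R) (x' : 'I_m' -> 'rV[R]_n),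
      fsdist_mean p x mu -> fsdist_mean p' x' mu -> mpc p x p' x' ->
      \sum_j p' j * W (x' j) <= \sum_j p j * W (x j).

End Defs.

(* Main.v *)
Require Import Defs.
From HB Require Import structures.
From mathcomp Require Import all_boot all_order all_algebra.
From mathcomp Require Import all_classical all_reals all_analysis.
From mathcomp Require Import ring lra.
Set Implicit Arguments. Unset Strict Implicit. Unset Printing Implicit Defensive.
Import Order.TTheory GRing.Theory Num.Theory numFieldNormedType.Exports.
Local Open Scope ring_scope.

Lemma bool_cont (R : realType) (f : bool -> R) : continuous f.
Proof.
move=> b U hU; rewrite /= nbhs_principalE; apply/principal_filterP.
exact: nbhs_singleton hU.
Qed.

Lemma bool_haus : hausdorff_space bool.
Proof. exact: discrete_hausdorff. Qed.

Definition Wd (R : realType) n (phi : 'rV[R]_n -> 'rV[R]_n) (d : 'I_n -> R)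
  (x : 'rV[R]_n) : R := if 0 <= expect (phi x) d then expect x d else 0.

Lemma expect_comb (R : realType) n (x1 x2 : 'rV[R]_n) a b d :
  expect (a *: x1 + b *: x2) d = a * expect x1 d + b * expect x2 d.
Proof.
rewrite /expect !mulr_sumr -big_split; apply: eq_bigr => t _; by rewrite !mxE mulrDl !mulrA.
Qed.

Lemma sum_comb (R : realType) n (x1 x2 : 'rV[R]_n) a b :
  \sum_t (a *: x1 + b *: x2) 0 t = a * \sum_t x1 0 t + b * \sum_t x2 0 t.
Proof.
by rewrite !mulr_sumr -big_split; apply: eq_bigr => t _; rewrite !mxE.
Qed.

Lemma lower_bound (R : realType) n (f : 'I_n -> R) :
  (forall t, 0 < f t) -> exists2 e, 0 < e & forall t, e <= f t.
Proof.
move=> hf; exists (\big[Num.min/1]_t f t).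
  by apply: (big_ind (fun x => 0 < x)) => // x y hx hy; rewrite lt_min hx hy.
by move=> t; rewrite (bigD1 t) //= ge_min lexx.
Qed.

Lemma simplex_le1 (R : realType) n (x : 'rV[R]_n) t : simplex x -> x 0 t <= 1.
Proof.
move=> [h0 h1]; rewrite -h1 (bigD1 t) //= lerDl; exact: sumr_ge0.
Qed.

Lemma simplex_comb (R : realType) n (x1 x2 : 'rV[R]_n) a b :
  simplex x1 -> simplex x2 -> 0 <= a -> 0 <= b -> a + b = 1 ->
  simplex (a *: x1 + b *: x2).
Proof.
move=> [p1 s1] [p2 s2] a0 b0 ab; split; last by rewrite sum_comb s1 s2 !mulr1.
move=> t; rewrite !mxE; apply: addr_ge0; exact: mulr_ge0.
Qed.

Lemma expect_u (R : realType) n (y : 'rV[R]_n) (d : 'I_n -> R) (b : bool) :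
  expect y (fun t => if b then d t else 0) = if b then expect y d else 0.
Proof. by case: b => //; rewrite /expect big1 // => t _; rewrite mulr0. Qed.

Lemma convW (R : realType) n (phi : 'rV[R]_n -> 'rV[R]_n) mu (d : 'I_n -> R) :
  relint_simplex mu -> respects_blackwell phi mu ->
  forall x1 x2 a, simplex x1 -> simplex x2 -> 0 < a -> a < 1 ->
  Wd phi d (a *: x1 + (1 - a) *: x2) <= a * Wd phi d x1 + (1 - a) * Wd phi d x2.
Proof.
move=> [mupos musum] HB x1 x2 a s1 s2 a0 a1.
set y := a *: x1 + (1 - a) *: x2.
have sy : simplex y by apply: simplex_comb => //; lra.
have [e e0 emu] := lower_bound mupos.
set z := (1 + e) *: mu + (- e) *: y.
have sz : simplex z.
  split; last by rewrite sum_comb musum sy.2; ring.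
  move=> t; have h1 := simplex_le1 t sy; have h2 := emu t; have h5 := sy.1 t.
  rewrite !mxE in h1 h5 *.
  have h3 : 0 <= e * (1 - (a * x1 0 t + (1 - a) * x2 0 t)) by apply: mulr_ge0; lra.
  have h4 : 0 <= e * mu 0 t by apply: mulr_ge0; lra.
  lra.
set k := e / (1 + e).
have k0 : 0 < k by rewrite /k divr_gt0 //; lra.
have k1 : k < 1 by rewrite /k ltr_pdivrMr; lra.
pose p : 'I_3 -> R := fun j => nth 0 [:: k * a; k * (1 - a); 1 - k] j.
pose xs : 'I_3 -> 'rV[R]_n := fun j => nth 0 [:: x1; x2; z] j.
pose p' : 'I_2 -> R := fun j => nth 0 [:: k; 1 - k] j.
pose xs' : 'I_2 -> 'rV[R]_n := fun j => nth 0 [:: y; z] j.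
pose q : 'I_2 -> 'I_3 -> R :=
  fun i j => nth 0 (nth [::] [:: [:: a; 1 - a; 0]; [:: 0; 0; 1]] i) j.
have Hc : forall t, continuous (fun b : bool => if b then d t else 0).
  by move=> t; exact: bool_cont.
have Hcons : forall y0 : 'rV[R]_n, simplex y0 -> forall b : bool,
    expect y0 (fun t => if b then d t else 0) <=
    expect y0 (fun t => if (0 <= expect y0 d) then d t else 0).
  move=> y0 _ b; rewrite !expect_u; case: b; case: ifP => // h.
  - by rewrite ltW // ltNge h.
have e1 : 1 + e != 0 by apply/negP => /eqP; lra.
have F1 : fsdist_mean p xs mu.
  split.
  - move=> [[|[|[|j]]] hj] //=; rewrite /p /=; try (apply: mulr_ge0); lra.
  - rewrite !big_ord_recl big_ord0 /p /=; ring.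
  - move=> [[|[|[|j]]] hj] //=.
  - rewrite !big_ord_recl big_ord0 /p /xs /=.
    apply/rowP => t; rewrite /z /y /k !mxE; field; exact: e1.
have F2 : fsdist_mean p' xs' mu.
  split.
  - move=> [[|[|j]] hj] //=; rewrite /p' /=; lra.
  - rewrite !big_ord_recl big_ord0 /p' /=; ring.
  - move=> [[|[|j]] hj] //=.
  - rewrite !big_ord_recl big_ord0 /p' /xs' /=.
    apply/rowP => t; rewrite /z /y /k !mxE; field; exact: e1.
have M : mpc p xs p' xs'.
  exists q; split.
  - move=> [[|[|i]] hi] [[|[|[|j]]] hj] //=; rewrite /q /=; lra.
  - move=> [[|[|i]] hi] //=; rewrite !big_ord_recl big_ord0 /q /=; ring.
  - move=> [[|[|[|j]]] hj] //=; rewrite !big_ord_recl big_ord0 /q /p /p' /=; ring.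
  - move=> [[|[|i]] hi] //= _; rewrite !big_ord_recl big_ord0 /q /xs /xs' /=;
      apply/rowP => t; rewrite /y !mxE; ring.
have := HB bool (fun b t => if b then d t else 0) (fun y => 0 <= expect y d)
  bool_haus bool_compact Hc Hcons 3 p xs 2 p' xs' F1 F2 M.
rewrite !big_ord_recl !big_ord0 /p /p' /xs /xs' /= !expect_u -!/(Wd phi d _).
move=> h.
have h' : k * Wd phi d y <= k * (a * Wd phi d x1 + (1 - a) * Wd phi d x2).
  by rewrite mulrDr !mulrA; lra.
by rewrite ler_pM2l in h'.
Qed.


Lemma expect_shift (R : realType) n (x : 'rV[R]_n) (d : 'I_n -> R) k :
  simplex x -> expect x (fun t => d t + k) = expect x d + k.
Proof.
move=> [_ s]; rewrite /expect.
under eq_bigr do rewrite mulrDr.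
by rewrite big_split /= -mulr_suml s mul1r.
Qed.

Lemma K0 (R : realType) n (phi : 'rV[R]_n -> 'rV[R]_n) mu (d : 'I_n -> R) :
  relint_simplex mu -> respects_blackwell phi mu ->
  forall a z, simplex a -> 0 < expect a d -> expect (phi a) d < 0 ->
  relint_simplex z -> expect z d != 0 -> expect (phi z) d < 0.
Proof.
move=> hmu HB a z sa Da Dpa [zpos zsum] Dz0.
have sz : simplex z by split => // t; exact: ltW.
have Wa : Wd phi d a = 0 by rewrite /Wd lt_geF.
rewrite ltNge; apply/negP => Dpz.
have Wz : Wd phi d z = expect z d by rewrite /Wd Dpz.
have [Dzn|Dzp] : expect z d < 0 \/ 0 < expect z d.
  by case: (ltgtP (expect z d) 0) => h; [left|right|rewrite h eqxx in Dz0].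
2:{
  have [e e0 ez] := lower_bound zpos.
  set x2 := (1 + e) *: z + (- e) *: a.
  have sx2 : simplex x2.
    split; last by rewrite sum_comb zsum sa.2; ring.
    move=> t; have h1 := simplex_le1 t sa; have h2 := ez t; have h5 := sa.1 t.
    rewrite !mxE.
    have h3 : 0 <= e * (1 - a 0 t) by apply: mulr_ge0; lra.
    have h4 : 0 <= e * z 0 t by apply: mulr_ge0; lra.
    lra.
  set al := e / (1 + e).
  have e1 : 1 + e != 0 by apply/negP => /eqP; lra.
  have al0 : 0 < al by rewrite /al divr_gt0 //; lra.
  have al1 : al < 1 by rewrite /al ltr_pdivrMr; lra.
  have hc := convW d hmu HB sa sx2 al0 al1.
  have ez' : al *: a + (1 - al) *: x2 = z.
    by apply/rowP => t; rewrite /x2 /al !mxE; field; exact: e1.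
  rewrite ez' Wa Wz mulr0 add0r in hc.
  have Dx2 : expect x2 d = (1 + e) * expect z d - e * expect a d.
    by rewrite /x2 expect_comb; ring.
  move: hc; rewrite /Wd; case: ifP => _; last by rewrite mulr0; lra.
  rewrite Dx2 => hc.
  have : (1 - al) * ((1 + e) * expect z d - e * expect a d) = expect z d - al * expect a d.
    by rewrite /al; field; exact: e1.
  move=> h; rewrite h in hc.
  have : 0 < al * expect a d by apply: mulr_gt0.
  lra. }
  set Da' := expect a d; set Dz := expect z d.
  set al := - Dz / (Da' - Dz).
  have dd : Da' - Dz != 0 by apply/negP => /eqP; rewrite /Da' /Dz; lra.
  have al0 : 0 < al by rewrite /al divr_gt0 //; rewrite /Da' /Dz; lra.
  have al1 : al < 1 by rewrite /al ltr_pdivrMr; rewrite /Da' /Dz; lra.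
  have hc := convW d hmu HB sa sz al0 al1.
  rewrite Wa Wz mulr0 add0r in hc.
  have Dy : expect (al *: a + (1 - al) *: z) d = 0.
    by rewrite expect_comb -/Da' -/Dz /al; field; exact: dd.
  move: hc; rewrite /Wd Dy if_same.
  have : 0 < (1 - al) * - Dz by apply: mulr_gt0; rewrite /Dz; lra.
  rewrite -/Dz; lra.
Qed.



Lemma Kfull (R : realType) n (phi : 'rV[R]_n -> 'rV[R]_n) mu (d : 'I_n -> R) :
  relint_simplex mu -> respects_blackwell phi mu ->
  (forall x, simplex x -> simplex (phi x)) ->
  forall a z, simplex a -> 0 < expect a d -> expect (phi a) d < 0 ->
  relint_simplex z -> expect (phi z) d < 0.
Proof.
move=> hmu HB hphi a z sa Da Dpa rz.
have [Dz0|Dz0] := eqVneq (expect z d) 0; last exact: (K0 hmu HB sa Da Dpa rz Dz0).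
have sz : simplex z by split; [move=> t; exact: ltW (rz.1 t)| exact: rz.2].
set k := - expect (phi a) d / 2.
have k0 : 0 < k by rewrite /k; lra.
pose d' := fun t => d t + k.
have spa := hphi a sa.
have spz := hphi z sz.
have Da' : 0 < expect a d' by rewrite /d' expect_shift //; lra.
have Dpa' : expect (phi a) d' < 0 by rewrite /d' expect_shift // /k; lra.
have Dz' : expect z d' != 0.
  by rewrite /d' expect_shift // Dz0 add0r; apply/negP => /eqP; lra.
have := K0 hmu HB sa Da' Dpa' rz Dz'.
rewrite /d' expect_shift //.
lra.
Qed.

Lemma Kprime (R : realType) n (phi : 'rV[R]_n -> 'rV[R]_n) mu (F : 'I_n -> R) :
  relint_simplex mu -> respects_blackwell phi mu ->
  (forall x, simplex x -> simplex (phi x)) ->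
  forall a z, simplex a -> relint_simplex z ->
  expect (phi a) F < expect a F -> expect (phi z) F <= expect (phi a) F.
Proof.
move=> hmu HB hphi a z sa rz hab.
have sz : simplex z by split; [move=> t; exact: ltW (rz.1 t)| exact: rz.2].
rewrite leNgt; apply/negP => hcb.
set pa := expect a F - expect (phi a) F.
set pc := expect (phi z) F - expect (phi a) F.
have pa0 : 0 < pa by rewrite /pa; lra.
have pc0 : 0 < pc by rewrite /pc; lra.
have [de [de0 [hde1 hde2]]] : exists de, 0 < de /\ de < pa /\ de < pc.
  by case: (lerP pa pc) => h; [exists (pa / 2) | exists (pc / 2)]; lra.
have spa := hphi a sa.
have spz := hphi z sz.
pose d' := fun t => F t - (expect (phi a) F + de).
have Da' : 0 < expect a d' by rewrite /d' expect_shift //; rewrite /pa in hde1; lra.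
have Dpa' : expect (phi a) d' < 0 by rewrite /d' expect_shift //; lra.
have := Kfull hmu HB hphi sa Da' Dpa' rz.
rewrite /d' expect_shift //; rewrite /pc in hde2; lra.
Qed.


Definition dot (R : realType) n (u v : 'rV[R]_n) : R := \sum_t u 0 t * v 0 t.

Lemma sumE2 (R : realType) n (f g h : 'I_n -> R) a b :
  (forall t, h t = a * f t + b * g t) ->
  \sum_t h t = a * \sum_t f t + b * \sum_t g t.
Proof.
move=> H; rewrite (eq_bigr _ (fun t _ => H t)) big_split /=.
by rewrite -!mulr_sumr.
Qed.

Lemma dot_combr (R : realType) n (u v w : 'rV[R]_n) a b :
  dot u (a *: v + b *: w) = a * dot u v + b * dot u w.
Proof. by apply: sumE2 => t; rewrite !mxE; ring. Qed.

Lemma dotC (R : realType) n (u v : 'rV[R]_n) : dot u v = dot v u.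
Proof. by apply: eq_bigr => t _; rewrite mulrC. Qed.

Lemma dot_combl (R : realType) n (u v w : 'rV[R]_n) a b :
  dot (a *: v + b *: w) u = a * dot v u + b * dot w u.
Proof. by rewrite dotC dot_combr (dotC u v) (dotC u w). Qed.

Lemma dot_subl (R : realType) n (u v w : 'rV[R]_n) :
  dot (u - v) w = dot u w - dot v w.
Proof.
rewrite /dot (@sumE2 _ _ (fun t => u 0 t * w 0 t) (fun t => v 0 t * w 0 t) _ 1 (-1)).
  by ring.
by move=> t; rewrite !mxE; ring.
Qed.

Lemma dot_ge0 (R : realType) n (u : 'rV[R]_n) : 0 <= dot u u.
Proof. by apply: sumr_ge0 => t _; rewrite -expr2 sqr_ge0. Qed.

Lemma dot_eq0 (R : realType) n (u : 'rV[R]_n) : dot u u = 0 -> u = 0.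
Proof.
move=> h; apply/rowP => t; rewrite mxE.
have pos : forall i : 'I_n, true -> 0 <= u 0 i * u 0 i.
  by move=> i _; rewrite -expr2 sqr_ge0.
have H0 := psumr_eq0P pos h; have := H0 t.
by move=> /(_ isT) /eqP; rewrite mulf_eq0 orbb => /eqP.
Qed.

Lemma LA (R : realType) n (U V : 'rV[R]_n) :
  U != 0 -> (forall F, 0 < dot U F -> dot V F <= 0) ->
  exists t, 0 <= t /\ V = (- t) *: U.
Proof.
move=> U0 H.
set uu := dot U U; set uv := dot U V; set vv := dot V V.
have uu0 : 0 < uu.
  rewrite lt_def dot_ge0 andbT; apply/negP => /eqP h.
  by move/eqP: U0; apply; exact: dot_eq0.
have uv0 : uv <= 0 by rewrite /uv dotC; exact: H.
set Wv := uu *: V + (- uv) *: U.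
have hUW : dot U Wv = 0 by rewrite /Wv dot_combr -/uv -/uu; ring.
have hWW : dot Wv Wv = uu * dot V Wv.
  by rewrite {1}/Wv dot_combl hUW; ring.
have hWW0 : dot Wv Wv = 0.
  apply/eqP; rewrite eq_le dot_ge0 andbT hWW leNgt; apply/negP => hpos.
  have g0 : 0 < dot V Wv by rewrite pmulr_rgt0 in hpos.
  set g := dot V Wv.
  set ep := g / (2 * (1 - uv)).
  have d0 : 0 < 2 * (1 - uv) by lra.
  have ep0 : 0 < ep by rewrite /ep divr_gt0.
  have : 0 < dot U (1 *: Wv + ep *: U).
    by rewrite dot_combr hUW -/uu mulr0 add0r mulr_gt0.
  move/H; rewrite dot_combr mul1r -/g (dotC V U) -/uv.
  have : ep * (1 - uv) = g / 2 by rewrite /ep; field; apply/negP => /eqP; lra.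
  nra.
have W0 := dot_eq0 hWW0.
exists (- uv / uu); split.
  by rewrite divr_ge0 //; lra.
apply/rowP => t; have := congr1 (fun M : 'rV[R]_n => M 0 t) W0; rewrite /Wv !mxE => h.
have uun : uu != 0 by apply/negP => /eqP; lra.
have e : uv * U 0 t = uu * V 0 t by lra.
have -> : - (- uv / uu) * U 0 t = (uv * U 0 t) / uu by field.
by rewrite e; field.
Qed.


Lemma ray (R : realType) n (phi : 'rV[R]_n -> 'rV[R]_n) mu :
  relint_simplex mu -> respects_blackwell phi mu ->
  (forall x, simplex x -> simplex (phi x)) ->
  forall a z, simplex a -> phi a != a -> relint_simplex z ->
  exists t, 0 <= t /\ phi z = phi a + t *: (phi a - a).
Proof.
move=> hmu HB hphi a z sa na rz.
have U0 : a - phi a != 0 by rewrite subr_eq0 eq_sym.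
have [t [t0 ht]] : exists t, 0 <= t /\ phi z - phi a = (- t) *: (a - phi a).
  apply: LA U0 _ => F hF.
  have := Kprime (F := fun t => F 0 t) hmu HB hphi sa rz.
  rewrite dot_subl in hF; rewrite dot_subl.
  rewrite /expect -!/(dot _ F) => h.
  have h2 : dot (phi z) F <= dot (phi a) F by apply: h; lra.
  lra.
exists t; split => //; apply/rowP => i.
have := congr1 (fun M : 'rV[R]_n => M 0 i) ht; rewrite !mxE => h.
lra.
Qed.

Lemma offline (R : realType) n (mu a u : 'rV[R]_n) :
  (3 <= n)%N -> relint_simplex mu ->
  exists w, relint_simplex w /\ forall s, w <> a + s *: u.
Proof.
move=> n3 [mupos musum].
have [e e0 emu] := lower_bound mupos.
set ep := e / 2.
have ep0 : 0 < ep by rewrite /ep; lra.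
have lt0 : (0 < n)%N by apply: leq_trans n3.
have lt1 : (1 < n)%N by apply: leq_trans n3.
have lt2 : (2 < n)%N by [].
pose i0 : 'I_n := Ordinal lt0.
pose i1 : 'I_n := Ordinal lt1.
pose i2 : 'I_n := Ordinal lt2.
pose E (j : 'I_n) : 'rV[R]_n := \row_t (if t == i0 then ep else if t == j then - ep else 0).
have rE : forall j, j != i0 -> relint_simplex (mu + E j).
  move=> j nj; split.
    move=> t; rewrite !mxE; have := mupos t; have := emu t.
    by case: (t == i0); case: (t == j); rewrite /ep; lra.
  rewrite (@sumE2 _ _ (fun t => mu 0 t) (fun t => E j 0 t) _ 1 1); last first.
    by move=> t; rewrite !mxE; ring.
  rewrite musum (bigD1 i0) //= (bigD1 j) //= big1; last first.
    by move=> t /andP [h1 h2]; rewrite mxE (negbTE h1) (negbTE h2).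
  by rewrite !mxE eqxx (negbTE nj) eq_refl; ring.
have n10 : (i1 == i0) = false by [].
have n20 : (i2 == i0) = false by [].
have n21 : (i2 == i1) = false by [].
case: (pselect (exists s, mu = a + s *: u)) => [[s0 h0]|h0]; last first.
  exists mu; split => // s h; apply: h0; by exists s.
case: (pselect (exists s, mu + E i1 = a + s *: u)) => [[s1 h1]|h1]; last first.
  exists (mu + E i1); split; first by apply: rE; rewrite n10.
  by move=> s h; apply: h1; exists s.
case: (pselect (exists s, mu + E i2 = a + s *: u)) => [[s2 h2]|h2]; last first.
  exists (mu + E i2); split; first by apply: rE; rewrite n20.
  by move=> s h; apply: h2; exists s.
exfalso.
have c := fun (M N : 'rV[R]_n) (i : 'I_n) (h : M = N) => congr1 (fun M : 'rV[R]_n => M 0 i) h.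
have a00 := c _ _ i0 h0; have a10 := c _ _ i0 h1.
have a02 := c _ _ i2 h0; have a12 := c _ _ i2 h1; have a22 := c _ _ i2 h2.
rewrite !mxE /= ?eqxx ?n10 ?n20 ?n21 in a00 a10 a02 a12 a22.
have hs : (s1 - s0) * u 0 i0 = ep by lra.
have hs0 : s1 - s0 != 0 by apply/negP => /eqP h; rewrite h mul0r in hs; lra.
have hu : (s1 - s0) * u 0 i2 = 0 by lra.
move/eqP: hu; rewrite mulf_eq0 (negbTE hs0) /= => /eqP hu.
rewrite hu in a02 a22; lra.
Qed.

Unset Implicit Arguments.


Theorem corollary1 (R : realType) (n : nat)
    (phi : 'rV[R]_n -> 'rV[R]_n) (mu : 'rV[R]_n) :
  (3 <= n)%N ->
  relint_simplex mu ->
  (forall x, simplex x -> simplex (phi x)) ->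
  respects_blackwell phi mu ->
  (forall x, simplex x -> phi x = x) \/
  (forall x y, relint_simplex x -> relint_simplex y -> phi x = phi y).
Proof.
move=> n3 hmu hphi HB.
case: (pselect (exists x, simplex x /\ phi x != x)) => [[x [sx nx]]| hn]; last first.
  left => x sx; case: (eqVneq (phi x) x) => // hne; exfalso; apply: hn; by exists x.
right.
set u := phi x - x.
have [w [rw offw]] := offline x u n3 hmu.
have sw : simplex w by split; [move=> t; exact: ltW (rw.1 t) | exact: rw.2].
have [tw [tw0 htw]] := ray hmu HB hphi sx nx rw.
have nw : phi w != w.
  apply/eqP => e; apply: (offw (1 + tw)).
  rewrite -{1}e htw; apply/rowP => i; rewrite !mxE; ring.
have key : forall z, relint_simplex z -> phi z = phi w.
  move=> z rz.
  have [tz [tz0 htz]] := ray hmu HB hphi sx nx rz.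
  have [s [s0 hs]] := ray hmu HB hphi sw nw rz.
  have [s00|sn] := eqVneq s 0; first by rewrite hs s00 scale0r addr0.
  exfalso; apply: (offw (((1 + s) * (1 + tw) - 1 - tz) / s)).
  apply/rowP => i; have := congr1 (fun M : 'rV[R]_n => M 0 i) hs.
  rewrite htz htw !mxE => h.
  apply: (mulfI sn).
  have -> : s * (x 0 i + ((1 + s) * (1 + tw) - 1 - tz) / s * (phi x 0 i - x 0 i)) =
    s * x 0 i + ((1 + s) * (1 + tw) - 1 - tz) * (phi x 0 i - x 0 i) by field.
  lra.
move=> y1 y2 r1 r2; by rewrite (key y1 r1) (key y2 r2).
Qed.
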